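(* Let $(G,\boldsymbol{\gamma})$ be a Ross graph. Let $e$ be either an edge $ij$ with $i\neq j$ carrying any color in $\mathbb{Z}/2\mathbb{Z}$, or a self-loop at any vertex $i$ carrying color $1$. Then the colored graph obtained from $(G,\boldsymbol{\gamma})$ by adding $e$ is a reflection-$(2,2)$ graph.
   Context: A colored graph $(G,\boldsymbol{\gamma})$ is a finite directed multigraph $G$ (self-loops and parallel edges allowed) with a color $\gamma_{ij}\in\mathbb{Z}/2\mathbb{Z}$ on each edge. $\rho:H_1(G,\mathbb{Z})\to\mathbb{Z}/2\mathbb{Z}$ sends a cycle to the sum of its edge colors; the $\rho$-image of a subgraph is the image of its cycles, trivial if $\{0\}$. For a subgraph $G'$: $n',m'$ are its numbers of vertices and edges, $c'$ (resp. $c'_0$) the number of its connected components with non-trivial (resp. trivial) $\rho$-image. With $n$ vertices and $m$ edges in $G$: $(G,\boldsymbol{\gamma})$ is a Ross graph if $m=2n-2$ and every subgraph satisfies $m'\le 2n'-2c'-3c'_0$; it is a reflection-$(2,2)$ graph if $m=2n-1$ and every subgraph satisfies $m'\le 2n'-c'-2c'_0$. *)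

(* Defs.v *)
From HB Require Import structures.
From mathcomp Require Import all_boot all_order all_algebra.
From mathcomp Require Import boolp.
Set Implicit Arguments. Unset Strict Implicit. Unset Printing Implicit Defensive.
Import GRing.Theory Num.Theory.

(* A colored graph: finite directed multigraph (self-loops and parallel edges
   allowed, edges are elements of a finite type) with colors in Z/2Z = bool
   (addition is addb). *)
Record cgraph := CGraph {
  vert : finType;
  edge : finType;
  esrc : edge -> vert;
  etgt : edge -> vert;
  ecol : edge -> bool }.

Section ColoredGraphs.
Variable G : cgraph.
Implicit Types F : {set edge G}.

(* A subgraph is given by its edge set F; its vertices are the endpoints
   of edges in F. *)
Definition vset F : {set vert G} :=
  [set v | [exists e in F, (esrc e == v) || (etgt e == v)]].

Definition adj F : rel (vert G) := fun u v =>
  [exists e in F, ((esrc e == u) && (etgt e == v)) || ((etgt e == u) && (esrc e == v))].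

Definition comps F : {set {set vert G}} :=
  [set [set v | connect (adj F) u v] | u in vset F].

Definition dtail (d : edge G * bool) : vert G := if d.2 then esrc d.1 else etgt d.1.
Definition dhead (d : edge G * bool) : vert G := if d.2 then etgt d.1 else esrc d.1.

Fixpoint is_walk F (x : vert G) (s : seq (edge G * bool)) (y : vert G) : bool :=
  match s with
  | [::] => x == y
  | d :: s' => [&& d.1 \in F, dtail d == x & is_walk F (dhead d) s' y]
  end.

Definition rho (s : seq (edge G * bool)) : bool :=
  foldr (fun d b => addb (ecol d.1) b) false s.

(* the rho-image of the component C of F is non-trivial: some cycle (closed
   walk) of F in C has rho-value 1 *)
Definition nontrivial_comp F (C : {set vert G}) : Prop :=
  exists x s, [/\ x \in C, is_walk F x s x & rho s = true].

Definition ncomp_nt F : nat := #|[set C in comps F | `[< nontrivial_comp F C >]]|.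
Definition ncomp_t F : nat := #|[set C in comps F | ~~ `[< nontrivial_comp F C >]]|.

Definition ross_graph : Prop :=
  (#|edge G|%:Z = 2 * #|vert G|%:Z - 2)%R /\
  forall F : {set edge G},
    (#|F|%:Z <= 2 * #|vset F|%:Z - 2 * (ncomp_nt F)%:Z - 3 * (ncomp_t F)%:Z)%R.

Definition refl22_graph : Prop :=
  (#|edge G|%:Z = 2 * #|vert G|%:Z - 1)%R /\
  forall F : {set edge G},
    (#|F|%:Z <= 2 * #|vset F|%:Z - (ncomp_nt F)%:Z - 2 * (ncomp_t F)%:Z)%R.

End ColoredGraphs.

(* G plus a new edge i -> j with color c (the new edge is None) *)
Definition add_edge (G : cgraph) (i j : vert G) (c : bool) : cgraph :=
  @CGraph (vert G) (option (edge G))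
    (fun o => if o is Some e then esrc e else i)
    (fun o => if o is Some e then etgt e else j)
    (fun o => if o is Some e then ecol e else c).

(* Main.v *)
Require Import Defs.
From mathcomp Require Import all_boot all_order all_algebra.
From mathcomp Require Import boolp zify.
Set Implicit Arguments. Unset Strict Implicit.

Lemma card_split (T : finType) (A : {set T}) (P : pred T) :
  #|[set x in A | P x]| + #|[set x in A | ~~ P x]| = #|A|.
Proof.
rewrite -(cardsID [set x | P x] A); congr (_ + _); apply: eq_card => x;
by rewrite !inE // andbC.
Qed.

Lemma walk_vset (H : cgraph) F x s y :
  is_walk (G:=H) F x s y -> s != [::] -> x \in vset F.
Proof.
case: s => // d s' /= /and3P [dF /eqP <- _] _.
rewrite inE; apply/existsP; exists d.1; rewrite dF /dtail.
by case: d.2; rewrite eqxx ?orbT.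
Qed.

Lemma comps_sum (H : cgraph) F :
  ncomp_nt (G:=H) F + ncomp_t F = #|comps F|.
Proof. exact: card_split. Qed.

Section Cross.
Variables (G : cgraph) (i j : vert G) (c : bool).
Local Notation G' := (add_edge i j c).
Variables (F0 : {set edge G}) (F' : {set edge G'}).
Hypothesis hF : forall e, e \in F0 -> Some e \in F'.

Lemma vset_sub : vset F0 \subset vset (G:=G') F'.
Proof.
apply/subsetP => v; rewrite !inE => /existsP [e /andP [eF ev]].
by apply/existsP; exists (Some e); rewrite hF.
Qed.

Lemma adj_sub u v : adj F0 u v -> adj (G:=G') F' u v.
Proof.
move=> /existsP [e /andP [eF ev]].
by apply/existsP; exists (Some e); rewrite hF.
Qed.

Lemma connect_cross u v : connect (adj F0) u v -> connect (adj (G:=G') F') u v.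
Proof.
apply: connect_sub => x y /adj_sub h; exact: connect1.
Qed.

Lemma walk_cross x s y : is_walk F0 x s y ->
  is_walk (G:=G') F' x [seq (Some d.1, d.2) | d <- s] y.
Proof.
elim: s x => [|d s IH] x //= /and3P [dF dt w].
rewrite hF //=.
have -> : dtail (G:=G') (Some d.1, d.2) = dtail d by rewrite /dtail /=; case: d.2.
have -> : dhead (G:=G') (Some d.1, d.2) = dhead d by rewrite /dhead /=; case: d.2.
by rewrite dt IH.
Qed.

Lemma rho_cross s : rho (G:=G') [seq (Some d.1, d.2) | d <- s] = rho s.
Proof. by elim: s => //= d s ->. Qed.

Lemma comps_cross :
  #|comps (G:=G') F'| + #|vset F0| <= #|comps F0| + #|vset (G:=G') F'|.
Proof.
set A : {set vert G} := vset F0; set B : {set vert G} := vset (G:=G') F'.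
set cl := fun u => [set v | connect (adj F0) u v].
set cl' := fun u : vert G => [set v : vert G | connect (adj (G:=G') F') u v].
have AB : A \subset B := vset_sub.
have eB : B = A :|: (B :\: A) by rewrite -{1}(setID B A) (setIidPr AB).
have -> : comps (G:=G') F' = cl' @: B by [].
have -> : comps F0 = cl @: A by [].
set h := fun X : {set vert G} =>
  [set v | [exists u in X, connect (adj (G:=G') F') u v]].
have hcl u : h (cl u) = cl' u.
  apply/setP => v; rewrite !inE; apply/existsP/idP.
    move=> [w /andP [uw wv]].
    move: uw; rewrite /cl inE => uw. exact: connect_trans (connect_cross uw) wv.
  by move=> uv; exists u; rewrite inE connect0.
have e1 : cl' @: A = h @: (cl @: A).
  rewrite -imset_comp; apply: eq_in_imset => u _ /=; by rewrite hcl.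
have c1 : #|cl' @: A| <= #|cl @: A| by rewrite e1 leq_imset_card.
have c2 : #|cl' @: (B :\: A)| <= #|B :\: A| by exact: leq_imset_card.
have c3 : #|B :\: A| = #|B| - #|A| by rewrite cardsD (setIidPr AB).
have c4 : #|A| <= #|B| by exact: subset_leq_card.
have [c5 _] := leq_card_setU (cl' @: A) (cl' @: (B :\: A)).
rewrite eB imsetU -eB.
apply: (leq_trans (leq_add c5 (leqnn #|A|))). rewrite -addnA; apply: leq_add c1 _. apply: (leq_trans (leq_add c2 (leqnn _))). by rewrite c3 subnK.
Qed.

Lemma nt_cross : 0 < ncomp_nt F0 -> 0 < ncomp_nt (G:=G') F'.
Proof.
rewrite !card_gt0 => /set0Pn [C]; rewrite inE => /andP [_ /asboolP [x [s [_ w r]]]].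
have sn : s != [::] by case: s w r.
apply/set0Pn; exists [set v | connect (adj (G:=G') F') x v].
rewrite inE; apply/andP; split.
  apply/imsetP; exists x => //.
  apply: (walk_vset (walk_cross w)); by case: s sn {w r}.
apply/asboolP; exists x, [seq (Some d.1, d.2) | d <- s]; split.
- by rewrite inE connect0.
- exact: walk_cross.
- by rewrite rho_cross.
Qed.

End Cross.

Lemma arith0 (f0 a b nt0 t0 nt t : nat) :
  (f0%:Z <= 2 * a%:Z - 2 * nt0%:Z - 3 * t0%:Z)%R ->
  nt + t + a <= nt0 + t0 + b ->
  (f0%:Z <= 2 * b%:Z - nt%:Z - 2 * t%:Z)%R.
Proof. move=> h1 h2; lia. Qed.

Lemma arith1 (f0 a b nt0 t0 nt t : nat) :
  (f0%:Z <= 2 * a%:Z - 2 * nt0%:Z - 3 * t0%:Z)%R ->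
  nt + t + a <= nt0 + t0 + b ->
  (0 < nt0 -> 0 < nt) -> 0 < nt0 + t0 ->
  ((f0.+1)%:Z <= 2 * b%:Z - nt%:Z - 2 * t%:Z)%R.
Proof. move=> h1 h2 h3 h4; case: (posnP nt0) => [e|/h3 ?]; lia. Qed.

Lemma arith2 (b nt t : nat) :
  nt + t <= 1 -> (1 < b \/ (0 < b /\ 0 < nt)) ->
  ((1%N)%:Z <= 2 * b%:Z - nt%:Z - 2 * t%:Z)%R.
Proof. move=> h1 [h2|[h2 h3]]; lia. Qed.

Lemma card_opt (T : finType) (F : {set option T}) :
  #|F| = (None \in F) + #|[set e | Some e \in F]|.
Proof.
rewrite (cardsD1 None F); congr (_ + _).
have -> : F :\ None = Some @: [set e | Some e \in F].
  apply/setP => [[e|]]; rewrite !inE /=.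
    apply/idP/imsetP => [h|[e' he' [->]]]; first by exists e; rewrite ?inE.
    by rewrite inE in he'.
  by symmetry; apply: negbTE; apply/imsetP; case.
by rewrite card_imset //; exact: Some_inj.
Qed.

Theorem proposition2 (G : cgraph) (i j : vert G) (c : bool) :
  ross_graph G ->
  (i != j \/ (i = j /\ c = true)) ->
  refl22_graph (add_edge i j c).
Proof.
move=> [hm hR] hij; split.
  rewrite /= card_option; move: hm; rewrite /=; lia.
move=> F'.
set F0 := [set e | Some e \in F'].
have hF0 : forall e, e \in F0 -> Some e \in F' by move=> e; rewrite inE.
have hc := comps_cross hF0.
have hn := nt_cross hF0.
have hr := hR F0.
rewrite -!comps_sum in hc.
rewrite card_opt -/F0.
case hN : (None \in F'); last first.
  rewrite add0n; exact: arith0 hr hc.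
have [k0|k0] := posnP (ncomp_nt F0 + ncomp_t F0); last first.
  rewrite add1n; exact: arith1 hr hc hn k0.
have F0e : F0 = set0.
  apply/setP => e; rewrite in_set0; apply/negbTE/negP => eF.
  have : esrc e \in vset F0.
    by rewrite inE; apply/existsP; exists e; rewrite eF eqxx.
  move=> hv.
  have cl_in : [set v | connect (adj F0) (esrc e) v] \in comps F0.
    by apply/imsetP; exists (esrc e).
  move: k0; rewrite comps_sum => /eqP; rewrite cards_eq0 => /eqP e0.
  by rewrite e0 inE in cl_in.
rewrite F0e cards0 addn0.
set cl' := fun u : vert G => [set v : vert G | connect (adj (G:=add_edge i j c) F') u v].
have hB : vset (G:=add_edge i j c) F' \subset [set i; j].
  apply/subsetP => v; rewrite inE => /existsP [[e|] /andP [eF ev]].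
    have : e \in F0 by rewrite inE.
    by rewrite F0e inE.
  by rewrite !inE; case/orP: ev => /eqP <-; rewrite eqxx ?orbT.
have iB : i \in vset (G:=add_edge i j c) F'.
  by rewrite inE; apply/existsP; exists None; rewrite hN /= eqxx.
have jB : j \in vset (G:=add_edge i j c) F'.
  by rewrite inE; apply/existsP; exists None; rewrite hN /= eqxx orbT.
have aij : adj (G:=add_edge i j c) F' i j.
  by apply/existsP; exists None; rewrite hN /= !eqxx.
have aji : adj (G:=add_edge i j c) F' j i.
  by apply/existsP; exists None; rewrite hN /= !eqxx orbT.
have cij : cl' j = cl' i.
  apply/setP => v; rewrite !inE; apply/idP/idP => h; apply: connect_trans h;
  exact: connect1.
have k1 : #|comps (G:=add_edge i j c) F'| <= 1.
  rewrite -(cards1 (cl' i)); apply: subset_leq_card; apply/subsetP => C.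
  move=> /imsetP [v vB ->]; rewrite inE.
  move: (subsetP hB v vB); rewrite !inE => /orP [] /eqP -> //.
  by rewrite -/(cl' j) cij.
rewrite -comps_sum in k1.
apply: arith2 => //.
case: hij => [nij|[eij ct]].
  left; apply: (@leq_trans #|[set i; j]|); first by rewrite cards2 nij. apply: subset_leq_card.
  by apply/subsetP => v /set2P [] ->.
right; split; first by apply/card_gt0P; exists i.
apply/card_gt0P; exists (cl' i); rewrite inE; apply/andP; split.
  by apply/imsetP; exists i.
apply/asboolP; exists i, [:: (None, true)]; split.
- by rewrite inE connect0.
- by rewrite /= hN /dtail /dhead /= eij !eqxx.
- by rewrite /rho /= ct.
Qed.
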